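(* Let $\mathbf{H}$ be any one of the four history systems $\mathbf{G3N}^{Hist}$, $\mathbf{G3NeF}^{Hist}$, $\mathbf{G3CoPC}^{Hist}$, $\mathbf{G3MPC}^{Hist}$. Backward proof search in $\mathbf{H}$ terminates: there is no infinite sequence $S_0,S_1,S_2,\dots$ of history sequents such that, for every $i$, $S_{i+1}$ is a premise of some instance of a rule of $\mathbf{H}$ whose conclusion is $S_i$.
   Context: Formulas are generated from a countable set of propositional variables $p,q,\dots$ and the constant $\top$ by the grammar $\varphi::= p\mid\top\mid\varphi\wedge\varphi\mid\varphi\vee\varphi\mid\varphi\to\varphi\mid\neg\varphi$ (there is no constant $\bot$). A history sequent is an expression $\mathcal H\mid\Gamma\Rightarrow\varphi$ where $\mathcal H$ (the history) is a finite set of formulas, $\Gamma$ is a finite multiset of formulas and $\varphi$ is a formula (the goal). $(\psi,\mathcal H)$ denotes $\mathcal H\cup\{\psi\}$, $\emptyset$ is the empty history, $\Gamma,\alpha$ denotes $\Gamma$ with one more occurrence of $\alpha$, and ''$\alpha\in\Gamma$'' means $\alpha$ occurs in $\Gamma$. History rules ($p$ a propositional variable; side conditions after ''if''): (ax) $\mathcal H\mid\Gamma,p\Rightarrow p$; ($\top$) $\mathcal H\mid\Gamma\Rightarrow\top$; ($\to$r$_1$) from $\emptyset\mid\Gamma,\alpha\Rightarrow\beta$ infer $\mathcal H\mid\Gamma\Rightarrow\alpha\to\beta$, if $\alpha\notin\Gamma$; ($\to$r$_2$) from $\mathcal H\mid\Gamma\Rightarrow\beta$ infer $\mathcal H\mid\Gamma\Rightarrow\alpha\to\beta$,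 if $\alpha\in\Gamma$; ($\to$l) from $(\varphi,\mathcal H)\mid\Gamma,\alpha\to\beta\Rightarrow\alpha$ and $\emptyset\mid\Gamma,\alpha\to\beta,\beta\Rightarrow\varphi$ infer $\mathcal H\mid\Gamma,\alpha\to\beta\Rightarrow\varphi$, if $\varphi\notin\mathcal H$ and $\beta\notin\Gamma$; ($\wedge$r) from $\mathcal H\mid\Gamma\Rightarrow\alpha$ and $\mathcal H\mid\Gamma\Rightarrow\beta$ infer $\mathcal H\mid\Gamma\Rightarrow\alpha\wedge\beta$; ($\wedge$l$_1$) from $\emptyset\mid\Gamma,\alpha\wedge\beta,\alpha\Rightarrow\varphi$ infer $\mathcal H\mid\Gamma,\alpha\wedge\beta\Rightarrow\varphi$, if $\alpha\notin\Gamma$; ($\wedge$l$_2$) from $\emptyset\mid\Gamma,\alpha\wedge\beta,\beta\Rightarrow\varphi$ infer $\mathcal H\mid\Gamma,\alpha\wedge\beta\Rightarrow\varphi$, if $\beta\notin\Gamma$; ($\vee$r$_1$), ($\vee$r$_2$) from $\mathcal H\mid\Gamma\Rightarrow\alpha$ (resp. $\mathcal H\mid\Gamma\Rightarrow\beta$) infer $\mathcal H\mid\Gamma\Rightarrow\alpha\vee\beta$; ($\vee$l) from $\emptyset\mid\Gamma,\alpha\vee\beta,\alpha\Rightarrow\varphi$ and $\emptyset\mid\Gamma,\alpha\vee\beta,\beta\Rightarrow\varphi$ infer $\mathcal H\mid\Gamma,\alpha\vee\beta\Rightarrow\varphi$, if $\alpha,\beta\notin\Gamma$; (n$_1$) from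 $\emptyset\mid\Gamma,\neg\alpha,\beta\Rightarrow\alpha$ and $\emptyset\mid\Gamma,\neg\alpha,\alpha\Rightarrow\beta$ infer $\mathcal H\mid\Gamma,\neg\alpha\Rightarrow\neg\beta$, if $\beta\notin\Gamma\cup\{\neg\alpha\}$ and $\alpha\notin\Gamma$; (n$_2$) from $\emptyset\mid\Gamma,\neg\alpha,\beta\Rightarrow\alpha$ and $\mathcal H\mid\Gamma,\neg\alpha\Rightarrow\beta$ infer $\mathcal H\mid\Gamma,\neg\alpha\Rightarrow\neg\beta$, if $\beta\notin\Gamma\cup\{\neg\alpha\}$ and $\alpha\in\Gamma$; (n$_3$) from $(\neg\beta,\mathcal H)\mid\Gamma,\neg\alpha\Rightarrow\alpha$ and $\emptyset\mid\Gamma,\neg\alpha,\alpha\Rightarrow\beta$ infer $\mathcal H\mid\Gamma,\neg\alpha\Rightarrow\neg\beta$, if $\neg\beta\notin\mathcal H$, $\beta\in\Gamma\cup\{\neg\alpha\}$ and $\alpha\notin\Gamma$; (n$_4$) from $(\neg\beta,\mathcal H)\mid\Gamma,\neg\alpha\Rightarrow\alpha$ and $\mathcal H\mid\Gamma,\neg\alpha\Rightarrow\beta$ infer $\mathcal H\mid\Gamma,\neg\alpha\Rightarrow\neg\beta$, if $\neg\beta\notin\mathcal H$, $\beta\in\Gamma\cup\{\neg\alpha\}$ and $\alpha\in\Gamma$; (nef) from $(\neg\beta,\mathcal H)\mid\Gamma,\neg\alpha\Rightarrow\alpha$ infer $\mathcal H\mid\Gamma,\neg\alpha\Rightarrow\neg\beta$,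 if $\neg\beta\notin\mathcal H$; (copc$_1$) from $\emptyset\mid\Gamma,\neg\alpha,\beta\Rightarrow\alpha$ infer $\mathcal H\mid\Gamma,\neg\alpha\Rightarrow\neg\beta$, if $\beta\notin\Gamma\cup\{\neg\alpha\}$; (copc$_2$) from $(\neg\beta,\mathcal H)\mid\Gamma,\neg\alpha\Rightarrow\alpha$ infer $\mathcal H\mid\Gamma,\neg\alpha\Rightarrow\neg\beta$, if $\neg\beta\notin\mathcal H$ and $\beta\in\Gamma\cup\{\neg\alpha\}$; (an) from $\emptyset\mid\Gamma,\alpha\Rightarrow\neg\alpha$ infer $\mathcal H\mid\Gamma\Rightarrow\neg\alpha$, if $\alpha\notin\Gamma$. In addition, the left rules ($\to$l), ($\wedge$l$_1$), ($\wedge$l$_2$), ($\vee$l) may only be applied when the goal $\varphi$ of the conclusion is a propositional variable, a negation or a disjunction. The positive history rules are (ax) through ($\vee$l). The four history systems are: $\mathbf{G3N}^{Hist}$ = positive history rules + (n$_1$)–(n$_4$); $\mathbf{G3NeF}^{Hist}$ = positive history rules + (n$_1$)–(n$_4$) + (nef); $\mathbf{G3CoPC}^{Hist}$ = positive history rules + (copc$_1$), (copc$_2$); $\mathbf{G3MPC}^{Hist}$ = positive history rules + (copc$_1$), (copc$_2$), (an). A derivation is a finite tree of rule instances whose leaves are instances of (ax) or ($\top$). *)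

(* Defs.v *)
From Stdlib Require Import List Permutation.
Import ListNotations.

Inductive formula : Type :=
| Var : nat -> formula
| Top : formula
| And : formula -> formula -> formula
| Or  : formula -> formula -> formula
| Imp : formula -> formula -> formula
| Neg : formula -> formula.

(* The history (a finite set) and the antecedent
   (a finite multiset) are represented by lists; sequents are identified up to
   [seq_equiv] (same elements of history, permutation of antecedent). *)
Record hseq : Type := HS { hist : list formula; ctx : list formula; goal : formula }.

Definition seq_equiv (S T : hseq) : Prop :=
  (forall x, In x (hist S) <-> In x (hist T)) /\
  Permutation (ctx S) (ctx T) /\ goal S = goal T.

Inductive system : Type := G3N | G3NeF | G3CoPC | G3MPC.

Definition has_n (s : system) : Prop := s = G3N \/ s = G3NeF.
Definition has_nef (s : system) : Prop := s = G3NeF.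
Definition has_copc (s : system) : Prop := s = G3CoPC \/ s = G3MPC.
Definition has_an (s : system) : Prop := s = G3MPC.

Definition lgoal (phi : formula) : Prop :=
  (exists p, phi = Var p) \/ (exists a, phi = Neg a) \/ (exists a b, phi = Or a b).

(* [rule s prems concl]: there is an instance of a rule of system [s] with
   premises [prems] and conclusion [concl]. "Γ, α" is written [α :: Γ]. *)
Inductive rule (s : system) : list hseq -> hseq -> Prop :=
| r_ax : forall H G p, rule s [] (HS H (Var p :: G) (Var p))
| r_top : forall H G, rule s [] (HS H G Top)
| r_impr1 : forall H G a b, ~ In a G ->
    rule s [HS [] (a :: G) b] (HS H G (Imp a b))
| r_impr2 : forall H G a b, In a G ->
    rule s [HS H G b] (HS H G (Imp a b))
| r_impl : forall H G a b phi, ~ In phi H -> ~ In b G -> lgoal phi ->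
    rule s [HS (phi :: H) (Imp a b :: G) a; HS [] (b :: Imp a b :: G) phi]
           (HS H (Imp a b :: G) phi)
| r_andr : forall H G a b,
    rule s [HS H G a; HS H G b] (HS H G (And a b))
| r_andl1 : forall H G a b phi, ~ In a G -> lgoal phi ->
    rule s [HS [] (a :: And a b :: G) phi] (HS H (And a b :: G) phi)
| r_andl2 : forall H G a b phi, ~ In b G -> lgoal phi ->
    rule s [HS [] (b :: And a b :: G) phi] (HS H (And a b :: G) phi)
| r_orr1 : forall H G a b,
    rule s [HS H G a] (HS H G (Or a b))
| r_orr2 : forall H G a b,
    rule s [HS H G b] (HS H G (Or a b))
| r_orl : forall H G a b phi, ~ In a G -> ~ In b G -> lgoal phi ->
    rule s [HS [] (a :: Or a b :: G) phi; HS [] (b :: Or a b :: G) phi]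
           (HS H (Or a b :: G) phi)
| r_n1 : forall H G a b, has_n s -> ~ In b (Neg a :: G) -> ~ In a G ->
    rule s [HS [] (b :: Neg a :: G) a; HS [] (a :: Neg a :: G) b]
           (HS H (Neg a :: G) (Neg b))
| r_n2 : forall H G a b, has_n s -> ~ In b (Neg a :: G) -> In a G ->
    rule s [HS [] (b :: Neg a :: G) a; HS H (Neg a :: G) b]
           (HS H (Neg a :: G) (Neg b))
| r_n3 : forall H G a b, has_n s -> ~ In (Neg b) H -> In b (Neg a :: G) -> ~ In a G ->
    rule s [HS (Neg b :: H) (Neg a :: G) a; HS [] (a :: Neg a :: G) b]
           (HS H (Neg a :: G) (Neg b))
| r_n4 : forall H G a b, has_n s -> ~ In (Neg b) H -> In b (Neg a :: G) -> In a G ->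
    rule s [HS (Neg b :: H) (Neg a :: G) a; HS H (Neg a :: G) b]
           (HS H (Neg a :: G) (Neg b))
| r_nef : forall H G a b, has_nef s -> ~ In (Neg b) H ->
    rule s [HS (Neg b :: H) (Neg a :: G) a] (HS H (Neg a :: G) (Neg b))
| r_copc1 : forall H G a b, has_copc s -> ~ In b (Neg a :: G) ->
    rule s [HS [] (b :: Neg a :: G) a] (HS H (Neg a :: G) (Neg b))
| r_copc2 : forall H G a b, has_copc s -> ~ In (Neg b) H -> In b (Neg a :: G) ->
    rule s [HS (Neg b :: H) (Neg a :: G) a] (HS H (Neg a :: G) (Neg b))
| r_an : forall H G a, has_an s -> ~ In a G ->
    rule s [HS [] (a :: G) (Neg a)] (HS H G (Neg a)).

Definition premise_step (s : system) (S' S : hseq) : Prop :=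
  exists prems C, rule s prems C /\ seq_equiv C S /\
    exists P, In P prems /\ seq_equiv P S'.

(* Main.v *)
Require Import Defs.
From Stdlib Require Import List Permutation Lia Wf_nat.
Import ListNotations.

Definition feq (x y : formula) : {x = y} + {x <> y}.
Proof. decide equality. apply PeanoNat.Nat.eq_dec. Defined.

Fixpoint fsize (f : formula) : nat :=
  match f with
  | Var _ => 1 | Top => 1
  | And a b => S (fsize a + fsize b)
  | Or a b => S (fsize a + fsize b)
  | Imp a b => S (fsize a + fsize b)
  | Neg a => S (fsize a)
  end.

Fixpoint sub (f : formula) : list formula :=
  match f with
  | Var _ => [f] | Top => [f]
  | And a b => f :: sub a ++ sub b
  | Or a b => f :: sub a ++ sub b
  | Imp a b => f :: sub a ++ sub b
  | Neg a => f :: sub a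
  end.

Lemma sub_self x : In x (sub x).
Proof. destruct x; simpl; auto. Qed.

Lemma sub_trans : forall y x z, In x (sub y) -> In z (sub x) -> In z (sub y).
Proof.
  induction y; simpl; intros x z H1 H2;
  repeat rewrite in_app_iff in *;
  destruct H1 as [<-|H1]; simpl in H2; repeat rewrite in_app_iff in *; try tauto;
  try (destruct H1; [right; left; eauto | right; right; eauto]);
  right; eauto.
Qed.

Definition closedU (U : list formula) :=
  (forall a b, In (And a b) U -> In a U /\ In b U) /\
  (forall a b, In (Or a b) U -> In a U /\ In b U) /\
  (forall a b, In (Imp a b) U -> In a U /\ In b U) /\
  (forall a, In (Neg a) U -> In a U).

Lemma closed_flat (l : list formula) : closedU (flat_map sub l).
Proof.
  assert (K : forall x y, In x (flat_map sub l) -> In y (sub x) -> In y (flat_map sub l)).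
  { intros x y H1 H2. apply in_flat_map in H1. destruct H1 as [z [Hz Hx]].
    apply in_flat_map. exists z. split; auto. eapply sub_trans; eauto. }
  repeat split; intros; eapply K; eauto; simpl; rewrite ?in_app_iff;
  auto using sub_self.
Qed.

Definition cnt (U l : list formula) : nat :=
  length (filter (fun x => if in_dec feq x l then false else true) U).

Lemma cnt_mono U l1 l2 : (forall x, In x l1 -> In x l2) -> cnt U l2 <= cnt U l1.
Proof.
  intro H. unfold cnt. induction U as [|u U IH]; simpl; auto.
  destruct (in_dec feq u l2); destruct (in_dec feq u l1); simpl; try lia.
  exfalso; auto.
Qed.

Lemma cnt_ext U l1 l2 : (forall x, In x l1 <-> In x l2) -> cnt U l1 = cnt U l2.
Proof.
  intro H. pose proof (cnt_mono U l1 l2 (fun x => proj1 (H x))).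
  pose proof (cnt_mono U l2 l1 (fun x => proj2 (H x))). lia.
Qed.

Lemma cnt_cons U a l : In a U -> ~ In a l -> cnt U (a :: l) < cnt U l.
Proof.
  intros Ha Hn. unfold cnt. induction U as [|u U IH]; cbn [filter length In] in *; [contradiction|].
  destruct Ha as [<-|Ha].
  - destruct (in_dec feq u (u :: l)) as [_|n]; [|exfalso; apply n; simpl; auto].
    destruct (in_dec feq u l); [contradiction|]. cbn [length].
    pose proof (cnt_mono U l (u :: l) (fun x h => or_intror h)) as H. unfold cnt in H. apply PeanoNat.Nat.lt_succ_r; exact H.
  - specialize (IH Ha).
    destruct (in_dec feq u (a :: l)); destruct (in_dec feq u l); cbn [length]; try lia.
    exfalso; apply n; simpl; auto.
Qed.

Definition Inv (U : list formula) (S : hseq) :=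
  In (goal S) U /\ forall x, In x (ctx S) -> In x U.

Definition m1 U S := cnt U (ctx S).
Definition m2 U S := cnt U (hist S).
Definition lexdec U P C :=
  m1 U P < m1 U C \/ (m1 U P = m1 U C /\
   (m2 U P < m2 U C \/ (m2 U P = m2 U C /\ fsize (goal P) < fsize (goal C)))).

Ltac nin := first [assumption | intros [E|E];
  [apply (f_equal fsize) in E; simpl in E; lia | contradiction]].

Lemma rule_step s U prems C P : closedU U -> rule s prems C -> In P prems ->
  Inv U C -> Inv U P /\ lexdec U P C.
Proof.
  intros [HA [HO [HI HN]]] Hr HP [Hg Hc].
  destruct Hr; simpl in HP; repeat destruct HP as [<-|HP]; try contradiction;
  simpl in Hg, Hc;
  try pose proof (Hc _ (or_introl eq_refl)) as Hh;
  repeat match goal with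
  | H : In (And ?a ?b) U |- _ =>
      lazymatch goal with _ : In a U, _ : In b U |- _ => fail | _ => destruct (HA _ _ H) end
  | H : In (Or ?a ?b) U |- _ =>
      lazymatch goal with _ : In a U, _ : In b U |- _ => fail | _ => destruct (HO _ _ H) end
  | H : In (Imp ?a ?b) U |- _ =>
      lazymatch goal with _ : In a U, _ : In b U |- _ => fail | _ => destruct (HI _ _ H) end
  | H : In (Neg ?a) U |- _ =>
      lazymatch goal with _ : In a U |- _ => fail | _ => pose proof (HN _ H) end
  end;
  (split; [split; simpl; [assumption| intros x Hx; simpl in Hx;
     repeat destruct Hx as [<-|Hx]; auto] |]);
  unfold lexdec, m1, m2; simpl;
  first [ left; apply cnt_cons; [assumption | nin]
        | right; split; [reflexivity | left; apply cnt_cons; [assumption|nin]]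
        | right; split; [reflexivity | right; split; [reflexivity | lia]] ].
Qed.

Lemma step s U S' S : closedU U -> premise_step s S' S -> Inv U S ->
  Inv U S' /\ lexdec U S' S.
Proof.
  intros HU [prems [C [Hr [[Ch [Cc Cg]] [P [HP [Ph [Pc Pg]]]]]]]] [Hg Hc].
  assert (IC : Inv U C).
  { split. rewrite Cg; auto. intros x Hx. apply Hc. eapply Permutation_in; eauto. }
  destruct (rule_step s U prems C P HU Hr HP IC) as [[Pg' Pc'] L].
  split.
  - split. rewrite <- Pg; auto. intros x Hx. apply Pc'.
    eapply Permutation_in; [apply Permutation_sym; eauto| auto].
  - unfold lexdec, m1, m2 in *.
    assert (E1 : cnt U (ctx C) = cnt U (ctx S)).
    { apply cnt_ext; intro x; split; intro;
      [eapply Permutation_in; [exact Cc|assumption] | eapply Permutation_in; [apply Permutation_sym; exact Cc|assumption]]. }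
    assert (E2 : cnt U (ctx P) = cnt U (ctx S')).
    { apply cnt_ext; intro x; split; intro;
      [eapply Permutation_in; [exact Pc|assumption] | eapply Permutation_in; [apply Permutation_sym; exact Pc|assumption]]. }
    assert (E3 : cnt U (hist C) = cnt U (hist S)) by (apply cnt_ext; auto).
    assert (E4 : cnt U (hist P) = cnt U (hist S')) by (apply cnt_ext; auto).
    rewrite <- Cg, <- Pg. lia.
Qed.

Theorem theorem5p5 : forall s : system,
  ~ exists f : nat -> hseq, forall i : nat, premise_step s (f (S i)) (f i).
Proof.
  intros s [f Hf].
  set (U := flat_map sub (goal (f 0) :: ctx (f 0))).
  assert (HU : closedU U) by apply closed_flat.
  assert (I0 : Inv U (f 0)).
  { split; [|intros x Hx]; apply in_flat_map.
    - exists (goal (f 0)); split; [left; reflexivity | apply sub_self].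
    - exists x; split; [right; exact Hx | apply sub_self]. }
  assert (Iall : forall i, Inv U (f i)).
  { induction i; auto. apply (step s U _ _ HU (Hf i) IHi). }
  assert (K : forall a b c i, m1 U (f i) = a -> m2 U (f i) = b ->
             fsize (goal (f i)) = c -> False).
  { intro a. induction a as [a IHa] using lt_wf_ind.
    intro b. induction b as [b IHb] using lt_wf_ind.
    intro c. induction c as [c IHc] using lt_wf_ind.
    intros i E1 E2 E3.
    destruct (step s U _ _ HU (Hf i) (Iall i)) as [_ L].
    unfold lexdec in L.
    destruct L as [L|[L1 [L|[L2 L]]]].
    - exact (IHa (m1 U (f (S i))) ltac:(lia) _ _ (S i) eq_refl eq_refl eq_refl).
    - exact (IHb (m2 U (f (S i))) ltac:(lia) _ (S i) ltac:(lia) eq_refl eq_refl).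
    - exact (IHc (fsize (goal (f (S i)))) ltac:(lia) (S i) ltac:(lia) ltac:(lia) eq_refl). }
  exact (K _ _ _ 0 eq_refl eq_refl eq_refl).
Qed.
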